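(* Suppose $\rho^w$ and $\rho^b$ are convex risk measures. Then an equal risk price without commitment exists if and only if the fair price interval $[-\varrho^b_\tau(0),\ \varrho^w_\tau(0)]$ is bounded. Moreover, when it exists it equals the center of this interval, $p_0^*=(\varrho^w_\tau(0)-\varrho^b_\tau(0))/2$.
   Context: Discrete-time setting: filtered probability space $(\Omega,\mathcal{F},(\mathcal{F}_t),\mathbb{P})$, zero interest rate, risky asset with $S_k:=S_{t_k}$ at trading dates $t_0<\dots<t_{K-1}<t_K=T$, $\Delta S_{k+1}=S_{k+1}-S_k$, adapted auxiliary process $Y_k$. Exercise times are stopping times $\tau:\Omega\to\{0,\dots,K\}$ with payoff $F(S_\tau,Y_\tau)=\sum_k\mathbf{1}\{\tau=k\}F_k(S_k,Y_k)$. $\bar{\mathcal{X}}_\tau(p_0)$: wealth processes with $X^\tau_0=p_0$, $X^\tau_{k+1}(\tau)=X^\tau_k(\tau)+(\xi_k\mathbf{1}\{\tau>k\}+\sum_{i=0}^k\hat\xi^i_k\mathbf{1}\{\tau=i\})\Delta S_{k+1}$ for every $\tau$, with $\xi_k,\hat\xi^i_k$ $\mathcal{F}_{t_k}$-measurable. A convex risk measure is monotone, translation invariant, normalized and convex. Define $\varrho^w_\tau(p_0)=\inf_{X^\tau\in\bar{\mathcal{X}}_\tau(p_0)}\sup_\tau\rho^w(F(S_\tau,Y_\tau)-X^\tau_K(\tau))$ and $\varrho^b_\tau(p_0)=\inf_{X^\tau\in\bar{\mathcal{X}}_\tau(-p_0)}\inf_\tau\rho^b(-F(S_\tau,Y_\tau)-X^\tau_K(\tau))$.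 The equal risk price without commitment is the unique $p_0^*$ with $\varrho^w_\tau(p_0^* )=\varrho^b_\tau(p_0^* )\in\mathbb{R}$. *)

(* Defs.v *)
From HB Require Import structures.
From mathcomp Require Import all_boot all_order all_algebra.
From mathcomp Require Import all_classical all_reals all_analysis.
Set Implicit Arguments. Unset Strict Implicit. Unset Printing Implicit Defensive.
Import Order.TTheory GRing.Theory Num.Theory.
Local Open Scope classical_set_scope.
Local Open Scope ring_scope.

Section Defs.
Context (R : realType) (d0 : measure_display) (Omega : measurableType d0).

Definition filtration (G : nat -> set (set Omega)) (K : nat) : Prop :=
  (forall k, (k <= K)%N -> sigma_algebra setT (G k)) /\
  (forall k, (k <= K)%N -> G k `<=` measurable) /\
  (forall k l, (k <= l <= K)%N -> G k `<=` G l).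

Definition measurable_wrt {d : measure_display} {T : measurableType d}
  (G : set (set Omega)) (f : Omega -> T) : Prop :=
  forall B : set T, measurable B -> G (f @^-1` B).

Definition adapted {d : measure_display} {T : measurableType d}
  (G : nat -> set (set Omega)) (K : nat) (X : nat -> Omega -> T) : Prop :=
  forall k, (k <= K)%N -> measurable_wrt (G k) (X k).

Definition stopping_time (G : nat -> set (set Omega)) (K : nat)
  (tau : Omega -> nat) : Prop :=
  (forall w, (tau w <= K)%N) /\
  (forall k, (k <= K)%N -> G k [set w | tau w = k]).

(* convex risk measure (losses convention: rho (X + c) = rho X + c) *)
Definition convex_risk_measure (rho : (Omega -> R) -> R) : Prop :=
  [/\ (forall X Y : Omega -> R, (forall w, X w <= Y w) -> rho X <= rho Y),
      (forall (X : Omega -> R) (c : R), rho (fun w => X w + c) = rho X + c),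
      rho (fun _ => 0) = 0 &
      (forall (X Y : Omega -> R) (l : R), 0 <= l <= 1 ->
         rho (fun w => l * X w + (1 - l) * Y w) <= l * rho X + (1 - l) * rho Y)].

Definition admissible (G : nat -> set (set Omega)) (K : nat)
  (xi : nat -> Omega -> R) (xih : nat -> nat -> Omega -> R) : Prop :=
  forall k, (k < K)%N ->
    measurable_wrt (G k) (xi k) /\
    (forall i, (i <= k)%N -> measurable_wrt (G k) (xih i k)).

Definition terminal_wealth (K : nat) (S : nat -> Omega -> R) (p0 : R)
  (xi : nat -> Omega -> R) (xih : nat -> nat -> Omega -> R)
  (tau : Omega -> nat) (w : Omega) : R :=
  p0 + \sum_(k < K)
     (xi k w * ((k < tau w)%N)%:R + \sum_(i < k.+1) xih i k w * (tau w == i)%:R)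
     * (S k.+1 w - S k w).

Definition payoff {d : measure_display} {V : measurableType d}
  (S : nat -> Omega -> R) (Y : nat -> Omega -> V) (F : nat -> R -> V -> R)
  (tau : Omega -> nat) (w : Omega) : R :=
  F (tau w) (S (tau w) w) (Y (tau w) w).

Local Open Scope ereal_scope.

Definition strategies (G : nat -> set (set Omega)) (K : nat) :
  set ((nat -> Omega -> R) * (nat -> nat -> Omega -> R)) :=
  [set xx | admissible G K xx.1 xx.2].

Definition writer_risk {d : measure_display} {V : measurableType d}
  (G : nat -> set (set Omega)) (K : nat) (S : nat -> Omega -> R)
  (Y : nat -> Omega -> V) (F : nat -> R -> V -> R) (rhow : (Omega -> R) -> R)
  (p0 : R) : \bar R :=
  ereal_inf [set ereal_sup
               [set (rhow (fun w => payoff S Y F tau w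
                                    - terminal_wealth K S p0 xx.1 xx.2 tau w))%:E
               | tau in stopping_time G K]
            | xx in strategies G K].

Definition buyer_risk {d : measure_display} {V : measurableType d}
  (G : nat -> set (set Omega)) (K : nat) (S : nat -> Omega -> R)
  (Y : nat -> Omega -> V) (F : nat -> R -> V -> R) (rhob : (Omega -> R) -> R)
  (p0 : R) : \bar R :=
  ereal_inf [set ereal_inf
               [set (rhob (fun w => - payoff S Y F tau w
                                    - terminal_wealth K S (- p0)%R xx.1 xx.2 tau w))%:E
               | tau in stopping_time G K]
            | xx in strategies G K].

Definition equal_risk_price {d : measure_display} {V : measurableType d}
  (G : nat -> set (set Omega)) (K : nat) (S : nat -> Omega -> R)
  (Y : nat -> Omega -> V) (F : nat -> R -> V -> R)
  (rhow rhob : (Omega -> R) -> R) (p0 : R) : Prop :=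
  writer_risk G K S Y F rhow p0 = buyer_risk G K S Y F rhob p0 /\
  writer_risk G K S Y F rhow p0 \is a fin_num.

End Defs.

(* Main.v *)
Require Import Defs.
From HB Require Import structures.
From mathcomp Require Import all_boot all_order all_algebra.
From mathcomp Require Import all_classical all_reals all_analysis.
From mathcomp Require Import lra ring.
Import Order.TTheory GRing.Theory Num.Theory.
Local Open Scope classical_set_scope.
Local Open Scope ring_scope.
Local Open Scope ereal_scope.
Lemma sup_shift_le (R : realType) (S : set (\bar R)) (c : R) :
  ereal_sup [set x + c%:E | x in S] <= ereal_sup S + c%:E.
Proof.
apply/ereal_supP => _ [x Sx <-]; rewrite leeD2r //.
exact: ereal_sup_ubound.
Qed.

Lemma sup_shift (R : realType) (S : set (\bar R)) (c : R) :
  ereal_sup [set x + c%:E | x in S] = ereal_sup S + c%:E.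
Proof.
apply/le_anti; rewrite sup_shift_le /=.
set T := [set x + c%:E | x in S].
have HS : S = [set y + (- c)%:E | y in T].
  apply/seteqP; split => x.
    by move=> Sx; exists (x + c%:E); [exists x|rewrite -addeA -EFinD subrr adde0].
  by move=> [_ [y Sy <-] <-]; rewrite -addeA -EFinD subrr adde0.
rewrite -leeBrDr // {1}HS.
by rewrite -EFinN; apply: sup_shift_le.
Qed.

Lemma inf_shift (R : realType) (S : set (\bar R)) (c : R) :
  ereal_inf [set x + c%:E | x in S] = ereal_inf S + c%:E.
Proof.
rewrite !ereal_infEN.
have -> : -%E @` [set x + c%:E | x in S] = [set x + (- c)%:E | x in -%E @` S].
  apply/seteqP; split => z.
    by move=> [_ [y Sy <-] <-]; exists (- y); [exists y|rewrite EFinN fin_num_oppeD].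
  by move=> [_ [y Sy <-] <-]; exists (y + c%:E); [exists y|rewrite EFinN fin_num_oppeD].
by rewrite sup_shift fin_num_oppeD // EFinN oppeK.
Qed.

Lemma sup_shift_img (R : realType) (T : Type) (A : set T) (f g : T -> \bar R) (c : R) :
  (forall x, A x -> f x = g x + c%:E) ->
  ereal_sup [set f x | x in A] = ereal_sup [set g x | x in A] + c%:E.
Proof.
move=> H; rewrite -sup_shift; congr ereal_sup; apply/seteqP; split => z.
  by move=> [x Ax <-]; exists (g x); [exists x|rewrite H].
by move=> [_ [x Ax <-] <-]; exists x => //; rewrite H.
Qed.

Lemma inf_shift_img (R : realType) (T : Type) (A : set T) (f g : T -> \bar R) (c : R) :
  (forall x, A x -> f x = g x + c%:E) ->
  ereal_inf [set f x | x in A] = ereal_inf [set g x | x in A] + c%:E.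
Proof.
move=> H; rewrite -inf_shift; congr ereal_inf; apply/seteqP; split => z.
  by move=> [x Ax <-]; exists (g x); [exists x|rewrite H].
by move=> [_ [x Ax <-] <-]; exists x => //; rewrite H.
Qed.

Lemma writer_shift (R : realType) (d0 : measure_display) (Omega : measurableType d0)
  (G : nat -> set (set Omega)) (K : nat)
  (d : measure_display) (V : measurableType d)
  (S : nat -> Omega -> R) (Y : nat -> Omega -> V) (F : nat -> R -> V -> R)
  (rho : (Omega -> R) -> R) (p : R) :
  convex_risk_measure rho ->
  writer_risk G K S Y F rho p = writer_risk G K S Y F rho 0 + (- p)%:E.
Proof.
case=> _ Htr _ _; rewrite /writer_risk.
apply: inf_shift_img => xx _; apply: sup_shift_img => tau _.
rewrite -EFinD -Htr; congr (_%:E); congr rho; apply: funext => w.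
rewrite /terminal_wealth; lra.
Qed.

Lemma buyer_shift (R : realType) (d0 : measure_display) (Omega : measurableType d0)
  (G : nat -> set (set Omega)) (K : nat)
  (d : measure_display) (V : measurableType d)
  (S : nat -> Omega -> R) (Y : nat -> Omega -> V) (F : nat -> R -> V -> R)
  (rho : (Omega -> R) -> R) (p : R) :
  convex_risk_measure rho ->
  buyer_risk G K S Y F rho p = buyer_risk G K S Y F rho 0 + p%:E.
Proof.
case=> _ Htr _ _; rewrite /buyer_risk.
apply: inf_shift_img => xx _; apply: inf_shift_img => tau _.
rewrite -EFinD -Htr; congr (_%:E); congr rho; apply: funext => w.
rewrite /terminal_wealth; lra.
Qed.
Theorem lemma4 (R : realType) (d0 : measure_display) (Omega : measurableType d0)
  (P : probability Omega R) (G : nat -> set (set Omega)) (K : nat)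
  (d : measure_display) (V : measurableType d)
  (S : nat -> Omega -> R) (Y : nat -> Omega -> V) (F : nat -> R -> V -> R)
  (rhow rhob : (Omega -> R) -> R) :
  filtration G K -> adapted G K S -> adapted G K Y ->
  convex_risk_measure rhow -> convex_risk_measure rhob ->
  ((exists p0 : R, equal_risk_price G K S Y F rhow rhob p0) <->
     ((- buyer_risk G K S Y F rhob 0)%E \is a fin_num /\
      writer_risk G K S Y F rhow 0 \is a fin_num)) /\
  (forall p0 : R, equal_risk_price G K S Y F rhow rhob p0 ->
     (p0%:E = (writer_risk G K S Y F rhow 0 - buyer_risk G K S Y F rhob 0)
              * (2^-1)%:E)%E).

Proof.
move=> _ _ _ Hw Hb.
have EW p := @writer_shift _ _ _ G K _ _ S Y F rhow p Hw.
have EB p := @buyer_shift _ _ _ G K _ _ S Y F rhob p Hb.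
rewrite /equal_risk_price.
set W0 := writer_risk G K S Y F rhow 0.
set B0 := buyer_risk G K S Y F rhob 0.
have key : forall p : R, writer_risk G K S Y F rhow p = buyer_risk G K S Y F rhob p /\
   writer_risk G K S Y F rhow p \is a fin_num ->
   exists w b : R, W0 = w%:E /\ B0 = b%:E /\ (p = (w - b) / 2)%R.
  move=> p; rewrite EW EB -/W0 -/B0; clearbody W0 B0 => -[H Hf].
  case: W0 H Hf => [w| |]; case: B0 => [b| |] //= H Hf.
  exists w, b; split => //; split => //.
  move: H => [] H; lra.
split; last first.
  move=> p /key [w [b [-> [-> ->]]]].
  by rewrite -EFinB -EFinM.
split.
  by move=> [p /key [w [b [-> [-> _]]]]].
rewrite /W0 /B0 => -[]; rewrite fin_numN.
move=> /fineK HB /fineK HW.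
exists ((fine W0 - fine B0) / 2)%R; rewrite EW EB /W0 /B0 -HW -HB.
rewrite -!EFinD; split => //; congr (_%:E); lra.
Qed.
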